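(* Let $n\ge2$. For every $\Gamma\cup\{\varphi\}\subseteq{\bf F}(\Sigma,\mathcal{V})$: $\Gamma\vdash_{C_n}\varphi$ iff $\Gamma\vDash^{\mathsf{RN}}_{\mathcal{RM}_{C_n}}\varphi$.
   Context: $\Sigma$ has unary $\neg$ and binary $\wedge,\vee,\to$; ${\bf F}(\Sigma,\mathcal{V})$ its formulas over a denumerable set $\mathcal{V}$. $\alpha^0=\alpha$, $\alpha^{k+1}=\neg(\alpha^k\wedge\neg\alpha^k)$; $\alpha^{(1)}=\alpha^1$, $\alpha^{(k+1)}=\alpha^{(k)}\wedge\alpha^{k+1}$. $C_n$ is the Hilbert calculus with Modus Ponens and axiom schemata: $\alpha\to(\beta\to\alpha)$; $(\alpha\to(\beta\to\gamma))\to((\alpha\to\beta)\to(\alpha\to\gamma))$; $\alpha\to(\beta\to(\alpha\wedge\beta))$; $(\alpha\wedge\beta)\to\alpha$; $(\alpha\wedge\beta)\to\beta$; $\alpha\to(\alpha\vee\beta)$; $\beta\to(\alpha\vee\beta)$; $(\alpha\to\gamma)\to((\beta\to\gamma)\to((\alpha\vee\beta)\to\gamma))$; $\alpha\vee\neg\alpha$; $\neg\neg\alpha\to\alpha$; $\alpha^{(n)}\to(\alpha\to(\neg\alpha\to\beta))$; $(\alpha^{(n)}\wedge\beta^{(n)})\to((\alpha\wedge\beta)^{(n)}\wedge(\alpha\vee\beta)^{(n)}\wedge(\alpha\to\beta)^{(n)})$. $B_n=\{z\in\{0,1\}^{n+1}:(z_1\wedge\dots\wedge z_k)\vee z_{k+1}=1\text{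 for all }1\le k\le n\}$, with elements $T_n=(1,0,1,\dots,1)$, $t^n_i$ ($0\le i\le n-2$) having $z_1=z_2=1$ and a single $0$ at coordinate $i+3$, $t^n_{n-1}=(1,\dots,1)$, $F_n=(0,1,\dots,1)$. $D_n=\{z:z_1=1\}$, $Boo_n=\{T_n,F_n\}$, $I_n=B_n\setminus Boo_n$. $\mathcal{A}_{C_n}$ on $B_n$: $\tilde\neg z=\{w\in B_n:w_1=z_2,\ w_2\le z_1\}$; for $\#\in\{\wedge,\vee,\to\}$, $z\tilde\#w=\{u\in Boo_n:u_1=z_1\#w_1\}$ if $z,w\in Boo_n$, else $\{u\in B_n:u_1=z_1\#w_1\}$. A valuation is $\nu$ with $\nu(\neg\alpha)\in\tilde\neg\nu(\alpha)$, $\nu(\alpha\#\beta)\in\nu(\alpha)\tilde\#\nu(\beta)$. $\mathcal{F}_{C_n}$: valuations with $\nu(\alpha)=t^n_0\Rightarrow\nu(\alpha\wedge\neg\alpha)=T_n$, and for $1\le k\le n-1$, $\nu(\alpha)=t^n_k\Rightarrow(\nu(\alpha\wedge\neg\alpha)\in I_n$ and $\nu(\alpha^1)=t^n_{k-1})$. $\mathcal{RM}_{C_n}=(\mathcal{A}_{C_n},D_n,\mathcal{F}_{C_n})$; $\Gamma\vDash^{\mathsf{RN}}_{\mathcal{RM}_{C_n}}\varphi$ iff every $\nu\in\mathcal{F}_{C_n}$ with $\nu[\Gamma]\subseteq D_n$ has $\nu(\varphi)\in D_n$. *)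

(* Defs.v *)
From Stdlib Require Import List Arith Bool.
Import ListNotations.

Inductive form : Type :=
| Var : nat -> form
| Neg : form -> form
| And : form -> form -> form
| Or  : form -> form -> form
| Imp : form -> form -> form.

Fixpoint fpow (k : nat) (a : form) : form :=
  match k with
  | 0 => a
  | S k' => Neg (And (fpow k' a) (Neg (fpow k' a)))
  end.

(** alpha^{(k)} for k >= 1: alpha^{(1)} = alpha^1, alpha^{(k+1)} = alpha^{(k)} /\ alpha^{k+1}.
    Indexed here so that [fwell k a] = alpha^{(k+1)}. *)
Fixpoint fwell_aux (k : nat) (a : form) : form :=
  match k with
  | 0 => fpow 1 a
  | S k' => And (fwell_aux k' a) (fpow (S (S k')) a)
  end.
Definition fwell (k : nat) (a : form) : form := fwell_aux (k - 1) a.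
(* fwell k a = alpha^{(k)} for k >= 1 *)

Inductive axiomCn (n : nat) : form -> Prop :=
| Ax1 a b : axiomCn n (Imp a (Imp b a))
| Ax2 a b c : axiomCn n (Imp (Imp a (Imp b c)) (Imp (Imp a b) (Imp a c)))
| Ax3 a b : axiomCn n (Imp a (Imp b (And a b)))
| Ax4 a b : axiomCn n (Imp (And a b) a)
| Ax5 a b : axiomCn n (Imp (And a b) b)
| Ax6 a b : axiomCn n (Imp a (Or a b))
| Ax7 a b : axiomCn n (Imp b (Or a b))
| Ax8 a b c : axiomCn n (Imp (Imp a c) (Imp (Imp b c) (Imp (Or a b) c)))
| Ax9 a : axiomCn n (Or a (Neg a))
| Ax10 a : axiomCn n (Imp (Neg (Neg a)) a)
| Ax11 a b : axiomCn n (Imp (fwell n a) (Imp a (Imp (Neg a) b)))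
| Ax12 a b : axiomCn n
    (Imp (And (fwell n a) (fwell n b))
         (And (And (fwell n (And a b)) (fwell n (Or a b))) (fwell n (Imp a b)))).

Inductive derivCn (n : nat) (Gamma : form -> Prop) : form -> Prop :=
| DHyp a : Gamma a -> derivCn n Gamma a
| DAx a : axiomCn n a -> derivCn n Gamma a
| DMP a b : derivCn n Gamma a -> derivCn n Gamma (Imp a b) -> derivCn n Gamma b.

(** Truth values: elements of {0,1}^{n+1} as lists of booleans of length n+1
    (true = 1). Coordinates are 1-indexed: coord z i = z_i. *)
Definition tv := list bool.
Definition coord (z : tv) (i : nat) : bool := nth (pred i) z false.

Definition inB (n : nat) (z : tv) : Prop :=
  length z = n + 1 /\
  forall k, 1 <= k <= n -> (forallb (fun b => b) (firstn k z) || coord z (k + 1)) = true.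

Definition Tn (n : nat) : tv := true :: false :: repeat true (n - 1).
Definition Fn (n : nat) : tv := false :: repeat true n.
(** t^n_i : z_1 = z_2 = 1, a single 0 at coordinate i+3 (for i <= n-2);
    for i = n-1 this yields (1,...,1). *)
Definition tn (n i : nat) : tv :=
  map (fun j => negb (Nat.eqb j (i + 2))) (seq 0 (n + 1)).

Definition inD (z : tv) : Prop := coord z 1 = true.
Definition inBoo (n : nat) (z : tv) : Prop := z = Tn n \/ z = Fn n.
Definition inI (n : nat) (z : tv) : Prop := inB n z /\ ~ inBoo n z.

Definition negM (n : nat) (z w : tv) : Prop :=
  inB n w /\ coord w 1 = coord z 2 /\ Bool.le (coord w 2) (coord z 1).

Definition binM (n : nat) (op : bool -> bool -> bool) (z w u : tv) : Prop :=
  ((inBoo n z /\ inBoo n w) -> inBoo n u /\ coord u 1 = op (coord z 1) (coord w 1)) /\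
  (~ (inBoo n z /\ inBoo n w) -> inB n u /\ coord u 1 = op (coord z 1) (coord w 1)).

Definition valuation (n : nat) (nu : form -> tv) : Prop :=
  (forall a, inB n (nu a)) /\
  (forall a, negM n (nu a) (nu (Neg a))) /\
  (forall a b, binM n andb (nu a) (nu b) (nu (And a b))) /\
  (forall a b, binM n orb (nu a) (nu b) (nu (Or a b))) /\
  (forall a b, binM n implb (nu a) (nu b) (nu (Imp a b))).

Definition inFCn (n : nat) (nu : form -> tv) : Prop :=
  valuation n nu /\
  (forall a, nu a = tn n 0 -> nu (And a (Neg a)) = Tn n) /\
  (forall a k, 1 <= k <= n - 1 -> nu a = tn n k ->
     inI n (nu (And a (Neg a))) /\ nu (fpow 1 a) = tn n (k - 1)).

Definition RNconseq (n : nat) (Gamma : form -> Prop) (phi : form) : Prop :=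
  forall nu, inFCn n nu -> (forall g, Gamma g -> inD (nu g)) -> inD (nu phi).

(* Main.v *)
Require Import Defs.
From Stdlib Require Import List Arith Bool Lia Classical ClassicalEpsilon Cantor.
Import ListNotations.

Lemma d_mono n (G G' : form -> Prop) a :
  (forall x, G x -> G' x) -> derivCn n G a -> derivCn n G' a.
Proof. intros H D; induction D. apply DHyp; auto. apply DAx; auto. eapply DMP; [apply IHD1|apply IHD2]. Qed.

Lemma d_refl n G a : derivCn n G (Imp a a).
Proof.
  eapply DMP. apply DAx, (Ax1 n a a).
  eapply DMP. apply DAx, (Ax1 n a (Imp a a)).
  apply DAx, (Ax2 n a (Imp a a) a).
Qed.

Lemma deduction n (G : form -> Prop) a b :
  derivCn n (fun x => G x \/ x = a) b -> derivCn n G (Imp a b).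
Proof.
  intro D; induction D as [x [Hx|Hx]|x Hx|x y D1 IH1 D2 IH2].
  - eapply DMP. apply DHyp, Hx. apply DAx, Ax1.
  - subst; apply d_refl.
  - eapply DMP. apply DAx, Hx. apply DAx, Ax1.
  - eapply DMP. apply IH1. eapply DMP. apply IH2. apply DAx, Ax2.
Qed.

Fixpoint enc (a : form) : nat :=
  match a with
  | Var i => to_nat (0, i)
  | Neg a => to_nat (1, enc a)
  | And a b => to_nat (2, to_nat (enc a, enc b))
  | Or a b => to_nat (3, to_nat (enc a, enc b))
  | Imp a b => to_nat (4, to_nat (enc a, enc b))
  end.

Lemma to_nat_inj p q : to_nat p = to_nat q -> p = q.
Proof. intro H. rewrite <- (cancel_of_to p), <- (cancel_of_to q), H; reflexivity. Qed.

Lemma enc_inj a : forall b, enc a = enc b -> a = b.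
Proof.
  induction a; destruct b; cbn [enc]; intro H; apply to_nat_inj in H;
  pose proof (f_equal fst H) as H1; pose proof (f_equal snd H) as H2;
  cbn [fst snd] in H1, H2; try discriminate; subst; auto;
  try (f_equal; auto; fail).
  all: apply to_nat_inj in H2;
  pose proof (f_equal fst H2) as H3; pose proof (f_equal snd H2) as H4;
  cbn [fst snd] in H3, H4; f_equal; auto.
Qed.

Fixpoint Lin n (G : form -> Prop) phi (i : nat) : form -> Prop :=
  match i with
  | 0 => G
  | S i => fun x => Lin n G phi i x \/
           (enc x = i /\ ~ derivCn n (fun y => Lin n G phi i y \/ y = x) phi)
  end.

Definition Delta n G phi x := exists i, Lin n G phi i x.

Lemma Lin_mono n G phi i j x : i <= j -> Lin n G phi i x -> Lin n G phi j x.
Proof. induction 1; simpl; auto. Qed.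

Lemma compact n G phi a : derivCn n (Delta n G phi) a -> exists i, derivCn n (Lin n G phi i) a.
Proof.
  intro D; induction D as [x [i Hx]|x Hx|x y D1 [i IH1] D2 [j IH2]].
  - exists i; apply DHyp, Hx.
  - exists 0; apply DAx, Hx.
  - exists (max i j). eapply DMP.
    + eapply d_mono; [|apply IH1]. intros; eapply Lin_mono; [|eauto]; lia.
    + eapply d_mono; [|apply IH2]. intros; eapply Lin_mono; [|eauto]; lia.
Qed.

Lemma Lin_cons n G phi : ~ derivCn n G phi -> forall i, ~ derivCn n (Lin n G phi i) phi.
Proof.
  intros H0 i; induction i; simpl; auto.
  destruct (classic (exists x, enc x = i /\ ~ derivCn n (fun y => Lin n G phi i y \/ y = x) phi))
    as [[x [Ex Nx]]|Hn].
  - intro D; apply Nx. eapply d_mono; [|apply D].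
    intros y [Hy|[Ey _]]; auto. right; apply enc_inj; congruence.
  - intro D; apply IHi. eapply d_mono; [|apply D].
    intros y [Hy|[Ey Ny]]; auto. exfalso; apply Hn; eauto.
Qed.

Definition maxth n (D : form -> Prop) phi :=
  ~ derivCn n D phi /\
  forall x, ~ derivCn n D x -> derivCn n (fun y => D y \/ y = x) phi.

Lemma Delta_max n G phi : ~ derivCn n G phi -> maxth n (Delta n G phi) phi.
Proof.
  intro H0; split.
  - intro D; destruct (compact _ _ _ _ D) as [i Di]; eapply Lin_cons; eauto.
  - intros x Nx. apply NNPP; intro Nd. apply Nx. apply DHyp. exists (S (enc x)). simpl.
    right; split; auto. intro D; apply Nd. eapply d_mono; [|apply D].
    intros y [Hy|Hy]; [left; exists (enc x); auto | right; auto].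
Qed.

Lemma Delta_sup n G phi x : G x -> Delta n G phi x.
Proof. intro; exists 0; auto. Qed.
Lemma fpow_S1 j a : fpow j (fpow 1 a) = fpow (S j) a.
Proof.
  induction j; [reflexivity|].
  change (fpow (S j) (fpow 1 a)) with (Neg (And (fpow j (fpow 1 a)) (Neg (fpow j (fpow 1 a))))).
  rewrite IHj; reflexivity.
Qed.

Lemma fwell_aux_D n (G : form -> Prop) k a :
  derivCn n G (fwell_aux k a) <-> (forall j, 1 <= j <= S k -> derivCn n G (fpow j a)).
Proof.
  induction k; cbn [fwell_aux].
  - split; [intros H j Hj; replace j with 1 by lia; auto | intro H; apply (H 1); lia].
  - split.
    + intros H j Hj.
      assert (H1 : derivCn n G (fwell_aux k a)) by (eapply DMP; [apply H| apply DAx, Ax4]).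
      assert (H2 : derivCn n G (fpow (S (S k)) a)) by (eapply DMP; [apply H| apply DAx, Ax5]).
      destruct (Nat.eq_dec j (S (S k))) as [->|]; [exact H2|].
      apply IHk; auto; lia.
    + intros H. eapply DMP; [|eapply DMP; [|apply DAx, Ax3]].
      * apply (H (S (S k))); lia.
      * apply IHk; intros; apply H; lia.
Qed.

Lemma fwell_D n G a : 1 <= n ->
  derivCn n G (fwell n a) <-> (forall j, 1 <= j <= n -> derivCn n G (fpow j a)).
Proof.
  intro Hn; unfold fwell; rewrite fwell_aux_D. replace (S (n-1)) with n by lia; tauto.
Qed.


Definition inc n D x := derivCn n D x /\ derivCn n D (Neg x).

Lemma M_and n D a b : derivCn n D (And a b) <-> derivCn n D a /\ derivCn n D b.
Proof.
  split.
  - intro H; split; eapply DMP; eauto; apply DAx; constructor.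
  - intros [A B]; eapply DMP; [exact B| eapply DMP; [exact A | apply DAx, Ax3]].
Qed.

Lemma M_imp_phi n D phi x : maxth n D phi -> ~ derivCn n D x -> derivCn n D (Imp x phi).
Proof. intros [_ Hm] Nx; apply deduction, Hm, Nx. Qed.

Lemma M_or n D phi a b : maxth n D phi ->
  derivCn n D (Or a b) <-> derivCn n D a \/ derivCn n D b.
Proof.
  intro H; split.
  - intro Ho; apply NNPP; intro N. apply (proj1 H).
    apply not_or_and in N; destruct N as [Na Nb].
    eapply DMP; [exact Ho|]. eapply DMP; [apply (M_imp_phi _ _ _ _ H Nb)|].
    eapply DMP; [apply (M_imp_phi _ _ _ _ H Na)|]. apply DAx, Ax8.
  - intros [A|B]; (eapply DMP; [eauto| apply DAx; constructor]).
Qed.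

Lemma M_neg n D phi a : maxth n D phi -> derivCn n D a \/ derivCn n D (Neg a).
Proof. intro H; apply (M_or _ _ _ _ _ H), DAx, Ax9. Qed.

Lemma M_nn n D a : derivCn n D (Neg (Neg a)) -> derivCn n D a.
Proof. intro; eapply DMP; eauto; apply DAx, Ax10. Qed.

Lemma M_ax11 n D phi a : maxth n D phi ->
  derivCn n D (fwell n a) -> inc n D a -> False.
Proof.
  intros H W [A B]; apply (proj1 H).
  eapply DMP; [exact B|]. eapply DMP; [exact A|]. eapply DMP; [exact W|]. apply DAx, Ax11.
Qed.

Lemma negM_pow n D a j : derivCn n D (Neg (fpow (S j) a)) -> inc n D a.
Proof.
  revert a; induction j; intros a H; simpl in H; apply M_nn, M_and in H; destruct H as [H1 H2].
  - split; auto.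
  - apply IHj; exact H2.
Qed.

Lemma notM_pow n D phi a j : maxth n D phi -> ~ derivCn n D (fpow (S j) a) -> inc n D a.
Proof.
  intros H N; simpl in N. destruct (M_neg n D phi (And (fpow j a) (Neg (fpow j a))) H) as [X|X];
  [|contradiction].
  apply M_and in X; destruct X as [X1 X2]. destruct j.
  - split; auto.
  - eapply negM_pow; eauto.
Qed.

Lemma cons_well n D phi a : 1 <= n -> maxth n D phi -> ~ inc n D a -> derivCn n D (fwell n a).
Proof.
  intros Hn H N. apply fwell_D; auto. intros j Hj. destruct j; [lia|].
  apply NNPP; intro X; apply N; eapply notM_pow; eauto.
Qed.

Lemma cons_up n D phi a : maxth n D phi -> ~ inc n D a ->
  derivCn n D (fpow 1 a) /\ ~ inc n D (fpow 1 a).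
Proof.
  intros H N; split.
  - apply NNPP; intro X; apply N; eapply (notM_pow _ _ _ _ 0); eauto.
  - intros [_ X]; apply N; eapply (negM_pow _ _ _ 0); eauto.
Qed.

Lemma M_imp n D phi a b : 1 <= n -> maxth n D phi ->
  derivCn n D (Imp a b) <-> (derivCn n D a -> derivCn n D b).
Proof.
  intros Hn H; split.
  - intros I A; eapply DMP; eauto.
  - intro I. destruct (classic (derivCn n D a)) as [A|A].
    + eapply DMP; [apply I, A| apply DAx, Ax1].
    + assert (W : derivCn n D (fwell n a)) by (apply (cons_well n D phi); auto; intros [X _]; auto).
      destruct (M_neg n D phi a H) as [X|X]; [contradiction|].
      apply deduction.
      assert (HD : forall y, D y -> (fun x => D x \/ x = a) y) by auto.
      eapply DMP; [apply (d_mono _ _ _ _ HD X)|].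
      eapply DMP; [apply DHyp; auto|].
      eapply DMP; [apply (d_mono _ _ _ _ HD W)|]. apply DAx, Ax11.
Qed.

Lemma cons_bin n D phi a b : 1 <= n -> maxth n D phi -> ~ inc n D a -> ~ inc n D b ->
  ~ inc n D (And a b) /\ ~ inc n D (Or a b) /\ ~ inc n D (Imp a b).
Proof.
  intros Hn H Na Nb.
  pose proof (cons_well _ _ _ _ Hn H Na) as Wa. pose proof (cons_well _ _ _ _ Hn H Nb) as Wb.
  assert (X : derivCn n D (And (And (fwell n (And a b)) (fwell n (Or a b))) (fwell n (Imp a b)))).
  { eapply DMP; [|apply DAx, Ax12]. apply M_and; auto. }
  apply M_and in X; destruct X as [X Z]; apply M_and in X; destruct X as [X Y].
  split; [|split]; intro I; [exact (M_ax11 _ _ _ _ H X I)|exact (M_ax11 _ _ _ _ H Y I)|exact (M_ax11 _ _ _ _ H Z I)].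
Qed.
Lemma nth_map_lt {A B} (f : A -> B) l j d d0 : j < length l -> nth j (map f l) d = f (nth j l d0).
Proof. intro H. rewrite (nth_indep _ _ (f d0)) by (rewrite length_map; auto). apply map_nth. Qed.

Lemma len_tn n k : length (tn n k) = n + 1.
Proof. unfold tn; rewrite length_map, length_seq; auto. Qed.
Lemma len_Tn n : 1 <= n -> length (Tn n) = n + 1.
Proof. intro; unfold Tn; simpl; rewrite repeat_length; lia. Qed.
Lemma len_Fn n : length (Fn n) = n + 1.
Proof. unfold Fn; simpl; rewrite repeat_length; lia. Qed.

Lemma nth_tn n k j : j < n + 1 -> nth j (tn n k) false = negb (Nat.eqb j (k + 2)).
Proof.
  intro Hj. unfold tn.
  rewrite (nth_map_lt _ _ _ _ 0) by (rewrite length_seq; auto).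
  rewrite seq_nth; auto.
Qed.

Lemma nth_Tn n j : 2 <= j < n + 1 -> nth j (Tn n) false = true.
Proof.
  intro Hj. unfold Tn. destruct j as [|[|j]]; try lia. simpl. apply nth_repeat_lt; lia.
Qed.

Lemma nth_Fn n j : 1 <= j < n + 1 -> nth j (Fn n) false = true.
Proof.
  intro Hj. unfold Fn. destruct j as [|j]; try lia. simpl. apply nth_repeat_lt; lia.
Qed.

Lemma forallb_firstn_false (z : list bool) k j :
  j < k -> j < length z -> nth j z false = false -> forallb (fun b => b) (firstn k z) = false.
Proof.
  intros H1 H2 H3. destruct (forallb (fun b => b) (firstn k z)) eqn:E; auto.
  rewrite forallb_forall in E.
  assert (I : In (nth j z false) (firstn k z)).
  { assert (E2 : nth j (firstn k z) false = nth j z false)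
      by (rewrite nth_firstn; replace (j <? k) with true by (symmetry; apply Nat.ltb_lt; auto); auto).
    rewrite <- E2. apply nth_In. rewrite length_firstn; lia. }
  apply E in I; congruence.
Qed.

Lemma forallb_firstn_true (z : list bool) k :
  (forall j, j < k -> nth j z false = true) -> forallb (fun b => b) (firstn k z) = true.
Proof.
  intro H. apply forallb_forall. intros x Hx. apply In_nth with (d := false) in Hx.
  destruct Hx as [j [Hj E]]. rewrite length_firstn in Hj. rewrite nth_firstn in E.
  replace (j <? k) with true in E by (symmetry; apply Nat.ltb_lt; lia). rewrite <- E; apply H; lia.
Qed.

Lemma inB_of n z : length z = n + 1 ->
  (forall k, 1 <= k <= n -> (forall j, j < k -> nth j z false = true) \/ nth k z false = true) -> inB n z.
Proof.
  intros L H. split; auto. intros k Hk. unfold coord. replace (pred (k + 1)) with k by lia.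
  destruct (H k Hk) as [E|E].
  - rewrite forallb_firstn_true; auto.
  - rewrite E; apply orb_true_r.
Qed.

Lemma inB_use n z k j : inB n z -> 1 <= k <= n -> j < k -> nth j z false = false ->
  nth k z false = true.
Proof.
  intros [L H] Hk Hj E. specialize (H k Hk). unfold coord in H.
  replace (pred (k + 1)) with k in H by lia.
  rewrite (forallb_firstn_false z k j) in H; auto. lia.
Qed.

Lemma inB_tn n k : inB n (tn n k).
Proof.
  apply inB_of; [apply len_tn|]. intros k' Hk'.
  destruct (Nat.eq_dec k' (k + 2)) as [->|Ne].
  - left. intros j Hj. rewrite nth_tn by lia.
    replace (j =? k + 2) with false by (symmetry; apply Nat.eqb_neq; lia). auto.
  - right. rewrite nth_tn by lia.
    replace (k' =? k + 2) with false by (symmetry; apply Nat.eqb_neq; lia). auto.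
Qed.

Lemma inB_Tn n : 1 <= n -> inB n (Tn n).
Proof.
  intro Hn. apply inB_of; [apply len_Tn; auto|]. intros k Hk.
  destruct (Nat.eq_dec k 1) as [->|Ne].
  - left. intros j Hj. replace j with 0 by lia. reflexivity.
  - right. apply nth_Tn; lia.
Qed.

Lemma inB_Fn n : inB n (Fn n).
Proof.
  apply inB_of; [apply len_Fn|]. intros k Hk. right. apply nth_Fn; lia.
Qed.

Lemma L1 n z : inB n z -> coord z 1 = false -> z = Fn n.
Proof.
  intros HB E. apply nth_ext with (d := false) (d' := false).
  - rewrite (proj1 HB), len_Fn; auto.
  - intros i Hi. rewrite (proj1 HB) in Hi. destruct i as [|i]; [exact E|].
    rewrite nth_Fn by lia. apply (inB_use n z (S i) 0); auto; lia.
Qed.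

Lemma L2 n z : 1 <= n -> inB n z -> coord z 1 = true -> coord z 2 = false -> z = Tn n.
Proof.
  intros Hn HB E1 E2. apply nth_ext with (d := false) (d' := false).
  - rewrite (proj1 HB), len_Tn; auto.
  - intros i Hi. rewrite (proj1 HB) in Hi. destruct i as [|[|i]]; [exact E1|exact E2|].
    rewrite nth_Tn by lia. apply (inB_use n z (S (S i)) 1); auto; lia.
Qed.

Lemma least_ex (P : nat -> Prop) i : P i -> exists m, P m /\ forall j, j < m -> ~ P j.
Proof.
  induction i as [i IH] using (well_founded_induction lt_wf). intro Hi.
  destruct (classic (exists j, j < i /\ P j)) as [[j [Hj Pj]]|N].
  - exact (IH j Hj Pj).
  - exists i; split; auto. intros j Hj Pj; apply N; eauto.
Qed.

Lemma L3 n z : inB n z -> coord z 1 = true -> coord z 2 = true ->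
  exists k, k <= n - 1 /\ z = tn n k.
Proof.
  intros HB E1 E2. pose proof (proj1 HB) as Lz.
  destruct (classic (exists i, i < n + 1 /\ nth i z false = false)) as [[i Hi]|N].
  - destruct (least_ex (fun i => i < n + 1 /\ nth i z false = false) i Hi) as [m [[Hm Em] Min]].
    assert (m <> 0) by (intro; subst; unfold coord in E1; simpl in E1; congruence).
    assert (m <> 1) by (intro; subst; unfold coord in E2; simpl in E2; congruence).
    exists (m - 2); split; [lia|].
    apply nth_ext with (d := false) (d' := false); [rewrite len_tn; auto|].
    intros j Hj. rewrite Lz in Hj. rewrite nth_tn by lia.
    destruct (Nat.lt_total j m) as [Lt|[Eq|Gt]].
    + replace (j =? m - 2 + 2) with false by (symmetry; apply Nat.eqb_neq; lia).
      simpl. destruct (nth j z false) eqn:Ej; auto. exfalso; apply (Min j); auto; split; auto; lia.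
    + subst. replace (m =? m - 2 + 2) with true by (symmetry; apply Nat.eqb_eq; lia). exact Em.
    + replace (j =? m - 2 + 2) with false by (symmetry; apply Nat.eqb_neq; lia).
      simpl. apply (inB_use n z j m); auto; lia.
  - exists (n - 1); split; [lia|].
    apply nth_ext with (d := false) (d' := false); [rewrite len_tn; auto|].
    intros j Hj. rewrite Lz in Hj. rewrite nth_tn by lia.
    replace (j =? n - 1 + 2) with false by (symmetry; apply Nat.eqb_neq; lia).
    simpl. destruct (nth j z false) eqn:Ej; auto. exfalso; apply N; eauto.
Qed.

Lemma tn_c1 n k : coord (tn n k) 1 = true.
Proof. unfold coord; simpl pred; rewrite nth_tn by lia. apply negb_true_iff, Nat.eqb_neq; lia. Qed.
Lemma tn_c2 n k : 1 <= n -> coord (tn n k) 2 = true.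
Proof. intro; unfold coord; simpl pred; rewrite nth_tn by lia. apply negb_true_iff, Nat.eqb_neq; lia. Qed.

Lemma tn_ne_T n k : tn n k <> Tn n.
Proof.
  intro E. assert (H := f_equal (fun z => coord z 2) E). simpl in H. destruct n.
  - unfold tn in H. simpl in H. unfold coord in H. simpl in H. discriminate.
  - rewrite tn_c2 in H by lia. unfold coord, Tn in H; simpl in H; discriminate.
Qed.

Lemma tn_ne_F n k : tn n k <> Fn n.
Proof.
  intro E. assert (H := f_equal (fun z => coord z 1) E). simpl in H.
  rewrite tn_c1 in H. unfold coord, Fn in H; simpl in H; discriminate.
Qed.

Lemma T_ne_F n : Tn n <> Fn n.
Proof. unfold Tn, Fn; congruence. Qed.

Lemma tn_inj n k k' : 2 <= n -> k <= n - 1 -> k' <= n - 1 -> tn n k = tn n k' -> k = k'.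
Proof.
  intros Hn H1 H2 E.
  assert (G : forall a b, a <= n - 2 -> b <= n - 1 -> tn n a = tn n b -> a = b).
  { intros a b Ha Hb Eab. assert (X := f_equal (fun z => nth (a + 2) z false) Eab). simpl in X.
    rewrite !nth_tn in X by lia. rewrite Nat.eqb_refl in X.
    destruct (Nat.eqb_spec (a + 2) (b + 2)); simpl in X; [lia|discriminate]. }
  destruct (le_lt_dec k (n - 2)); [apply G; auto|].
  destruct (le_lt_dec k' (n - 2)); [symmetry; apply G; auto|]. lia.
Qed.

Lemma bin_c1 n op z w u : binM n op z w u -> coord u 1 = op (coord z 1) (coord w 1).
Proof.
  intros [H1 H2]. destruct (classic (inBoo n z /\ inBoo n w)) as [X|X];
  [apply H1 in X|apply H2 in X]; tauto.
Qed.

Lemma bin_boo n op z w u : binM n op z w u -> inBoo n z -> inBoo n w -> inBoo n u.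
Proof. intros [H1 _] A B. apply H1; auto. Qed.

Definition Dn (nu : form -> tv) x := coord (nu x) 1 = true.

Lemma D_and n nu a b : valuation n nu -> (Dn nu (And a b) <-> Dn nu a /\ Dn nu b).
Proof.
  intros (_&_&Ha&_&_). unfold Dn. rewrite (bin_c1 _ _ _ _ _ (Ha a b)). apply andb_true_iff.
Qed.
Lemma D_or n nu a b : valuation n nu -> (Dn nu (Or a b) <-> Dn nu a \/ Dn nu b).
Proof.
  intros (_&_&_&Ho&_). unfold Dn. rewrite (bin_c1 _ _ _ _ _ (Ho a b)). apply orb_true_iff.
Qed.
Lemma D_imp n nu a b : valuation n nu -> (Dn nu (Imp a b) <-> (Dn nu a -> Dn nu b)).
Proof.
  intros (_&_&_&_&Hi). unfold Dn. rewrite (bin_c1 _ _ _ _ _ (Hi a b)).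
  destruct (coord (nu a) 1), (coord (nu b) 1); simpl; intuition congruence.
Qed.
Lemma D_neg n nu a : valuation n nu -> (Dn nu (Neg a) <-> coord (nu a) 2 = true).
Proof.
  intros (_&Hn&_). unfold Dn. destruct (Hn a) as (_&E&_). rewrite E. tauto.
Qed.

Lemma neg_TF n z w : 1 <= n -> negM n z w -> (z = Tn n -> w = Fn n) /\ (z = Fn n -> w = Tn n).
Proof.
  intros Hn (HB&E1&E2). split; intro; subst.
  - apply (L1 n); auto.
  - destruct n as [|m]; [lia|]. apply (L2 (S m)); auto.
    unfold coord in *; simpl in *. destruct (nth 1 w false); auto.
Qed.

Lemma Tn_c1 n : coord (Tn n) 1 = true. Proof. reflexivity. Qed.
Lemma Tn_c2 n : coord (Tn n) 2 = false. Proof. reflexivity. Qed.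
Lemma Fn_c1 n : coord (Fn n) 1 = false. Proof. reflexivity. Qed.

Lemma boo_pow1 n nu a : 1 <= n -> valuation n nu -> inBoo n (nu a) -> nu (fpow 1 a) = Tn n.
Proof.
  intros Hn V B. pose proof V as (VB&Vn&Va&_).
  assert (Bn : inBoo n (nu (Neg a)) /\ coord (nu (Neg a)) 1 = negb (coord (nu a) 1)).
  { destruct (neg_TF _ _ _ Hn (Vn a)) as [X Y].
    destruct B as [B|B]; rewrite B; [rewrite (X B)|rewrite (Y B)]; split; try reflexivity;
    [right|left]; auto. }
  assert (Ba : nu (And a (Neg a)) = Fn n).
  { destruct Bn as [Bn Cn]. pose proof (bin_boo _ _ _ _ _ (Va a (Neg a)) B Bn) as Bu.
    pose proof (bin_c1 _ _ _ _ _ (Va a (Neg a))) as Cu. rewrite Cn in Cu.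
    rewrite andb_negb_r in Cu. destruct Bu as [Bu|Bu]; auto. rewrite Bu in Cu; discriminate. }
  simpl. destruct (neg_TF _ _ _ Hn (Vn (And a (Neg a)))) as [_ Y]. auto.
Qed.

Lemma boo_pow n nu a j : 1 <= n -> valuation n nu -> inBoo n (nu a) -> nu (fpow (S j) a) = Tn n.
Proof.
  intros Hn V B. induction j.
  - apply boo_pow1; auto.
  - change (fpow (S (S j)) a) with (fpow 1 (fpow (S j) a)). apply boo_pow1; auto. left; auto.
Qed.

Lemma D_fwell_aux n nu k a : valuation n nu ->
  (Dn nu (fwell_aux k a) <-> (forall j, 1 <= j <= S k -> Dn nu (fpow j a))).
Proof.
  intro V. induction k; cbn [fwell_aux].
  - split; [intros H j Hj; replace j with 1 by lia; auto | intro H; apply (H 1); lia].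
  - rewrite (D_and _ _ _ _ V), IHk. split.
    + intros [H1 H2] j Hj. destruct (Nat.eq_dec j (S (S k))) as [->|]; [exact H2|]. apply H1; lia.
    + intro H; split; [intros; apply H; lia| apply H; lia].
Qed.

Lemma D_fwell n nu a : 1 <= n -> valuation n nu ->
  (Dn nu (fwell n a) <-> (forall j, 1 <= j <= n -> Dn nu (fpow j a))).
Proof.
  intros Hn V; unfold fwell; rewrite (D_fwell_aux _ _ _ _ V). replace (S (n-1)) with n by lia; tauto.
Qed.

Lemma notboo_tn n z : 1 <= n -> inB n z -> ~ inBoo n z -> exists k, k <= n - 1 /\ z = tn n k.
Proof.
  intros Hn B N. destruct (coord z 1) eqn:E1.
  - destruct (coord z 2) eqn:E2.
    + apply L3; auto.
    + exfalso; apply N; left; apply L2; auto.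
  - exfalso; apply N; right; apply L1; auto.
Qed.

Lemma well_iff n nu a : 2 <= n -> inFCn n nu -> (Dn nu (fwell n a) <-> inBoo n (nu a)).
Proof.
  intros Hn (V&F0&Fk). rewrite (D_fwell n nu a ltac:(lia) V). split.
  - intro H. apply NNPP; intro N.
    destruct (notboo_tn n (nu a) ltac:(lia) (proj1 V a) N) as [k [Hk E]].
    assert (P : forall j, j <= k -> nu (fpow j a) = tn n (k - j)).
    { induction j; intro Hj; [cbn [fpow]; rewrite E; f_equal; lia|].
      change (fpow (S j) a) with (fpow 1 (fpow j a)).
      destruct (Fk (fpow j a) (k - j) ltac:(lia) (IHj ltac:(lia))) as [_ X]. rewrite X; f_equal; lia. }
    specialize (P k (Nat.le_refl k)). rewrite Nat.sub_diag in P.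
    specialize (F0 _ P). specialize (H (S k) ltac:(lia)).
    change (fpow (S k) a) with (Neg (And (fpow k a) (Neg (fpow k a)))) in H.
    apply (D_neg _ _ _ V) in H. rewrite F0 in H. discriminate.
  - intros B j Hj. destruct j; [lia|]. unfold Dn. rewrite (boo_pow n nu a j ltac:(lia) V B). reflexivity.
Qed.

Lemma soundness n G phi : 2 <= n -> derivCn n G phi -> RNconseq n G phi.
Proof.
  intros Hn D nu Hnu HG. pose proof Hnu as (V&_&_). change (Dn nu phi).
  induction D as [x Hx|x Hx|x y D1 IH1 D2 IH2].
  - apply HG, Hx.
  - destruct Hx;
    repeat (rewrite (D_imp _ _ _ _ V) || rewrite (D_and _ _ _ _ V) || rewrite (D_or _ _ _ _ V));
    try tauto.
    + (* Ax9 *)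
      rewrite (D_neg _ _ _ V). unfold Dn. destruct (proj1 V a) as [L H1].
      specialize (H1 1 ltac:(lia)). destruct (nu a) as [|b z]; [simpl in L; lia|].
      unfold coord in *; simpl in *. destruct b; auto.
    + (* Ax10 *)
      intro H. apply (D_neg _ _ _ V) in H. destruct V as (_&Vn&_).
      destruct (Vn a) as (_&_&E). rewrite H in E. exact E.
    + (* Ax11 *)
      intros W A N. exfalso. apply (well_iff _ _ _ Hn Hnu) in W. apply (D_neg _ _ _ V) in N.
      unfold Dn in A. destruct W as [W|W]; rewrite W in *; discriminate.
    + (* Ax12 *)
      intros [Wa Wb]. apply (well_iff _ _ _ Hn Hnu) in Wa, Wb.
      destruct V as (_&_&Va&Vo&Vi).
      rewrite !(well_iff _ _ _ Hn Hnu). repeat split; eapply bin_boo; eauto.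
  - apply (D_imp n nu x y V) in IH2; auto.
Qed.

Definition kspec n D x k := k <= n - 1 /\ (forall j, j <= k -> inc n D (fpow j x)) /\
  ~ derivCn n D (fpow (S k) x).
Definition vspec n D x z := (inc n D x /\ exists k, kspec n D x k /\ z = tn n k) \/
  (~ inc n D x /\ derivCn n D x /\ z = Tn n) \/ (~ derivCn n D x /\ z = Fn n).

Lemma kspec_uniq n D x k k' : kspec n D x k -> kspec n D x k' -> k = k'.
Proof.
  intros (H1&H2&H3) (H1'&H2'&H3').
  destruct (Nat.lt_total k k') as [L|[E|L]]; auto; exfalso.
  - apply H3, (H2' (S k)); lia.
  - apply H3', (H2 (S k')); lia.
Qed.

Lemma cons_prop n D phi x j : maxth n D phi -> ~ inc n D (fpow j x) -> derivCn n D (fpow j x) ->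
  forall i, j <= i -> ~ inc n D (fpow i x) /\ derivCn n D (fpow i x).
Proof.
  intros H N M i Hi. induction Hi; auto.
  destruct IHHi as [N' _]. destruct (cons_up _ _ _ _ H N') as [A B]. split; auto.
Qed.

Lemma kspec_ex n D phi x : 1 <= n -> maxth n D phi -> inc n D x -> exists k, kspec n D x k.
Proof.
  intros Hn H I.
  assert (Q : forall m, m <= n -> (exists k, kspec n D x k) \/ (forall j, j <= m -> inc n D (fpow j x))).
  { induction m; intro Hm.
    - right; intros j Hj; replace j with 0 by lia; exact I.
    - destruct (IHm ltac:(lia)) as [K|A]; [left; exact K|].
      destruct (classic (derivCn n D (fpow (S m) x))) as [M|M].
      + destruct (classic (inc n D (fpow (S m) x))) as [I'|I'].
        * right; intros j Hj. destruct (Nat.eq_dec j (S m)) as [->|]; auto. apply A; lia.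
        * exfalso. apply (M_ax11 n D phi x H); auto. apply fwell_D; auto. intros j Hj.
          destruct (le_lt_dec j m). { apply A; auto. }
          apply (cons_prop n D phi x (S m) H I' M); lia.
      + left; exists m; split; [lia|split; auto]. }
  destruct (Q n (Nat.le_refl n)) as [K|A]; auto. exfalso.
  apply (M_ax11 n D phi x H); auto. apply fwell_D; auto. intros j Hj; apply A; lia.
Qed.

Lemma vspec_ex n D phi : 1 <= n -> maxth n D phi -> forall x, exists z, vspec n D x z.
Proof.
  intros Hn H x. destruct (classic (inc n D x)) as [I|I].
  - destruct (kspec_ex _ _ _ _ Hn H I) as [k K]. eexists; left; eauto.
  - destruct (classic (derivCn n D x)); eexists; right; [left|right]; eauto.
Qed.

Definition canon n D (Hex : forall x, exists z, vspec n D x z) (x : form) : tv :=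
  proj1_sig (constructive_indefinite_description _ (Hex x)).

Lemma canon_spec n D Hex x : vspec n D x (canon n D Hex x).
Proof. unfold canon. destruct (constructive_indefinite_description _ (Hex x)); auto. Qed.

Lemma c_inc n D Hex x k : inc n D x -> kspec n D x k -> canon n D Hex x = tn n k.
Proof.
  intros I K. destruct (canon_spec n D Hex x) as [[_ [k' [K' E]]]|[[N _]|[N _]]].
  - rewrite E; f_equal; eapply kspec_uniq; eauto.
  - contradiction.
  - exfalso; apply N, I.
Qed.

Lemma c_T n D Hex x : ~ inc n D x -> derivCn n D x -> canon n D Hex x = Tn n.
Proof.
  intros N M. destruct (canon_spec n D Hex x) as [[I _]|[[_ [_ E]]|[N' _]]]; tauto.
Qed.

Lemma c_F n D Hex x : ~ derivCn n D x -> canon n D Hex x = Fn n.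
Proof.
  intros N. destruct (canon_spec n D Hex x) as [[[M _] _]|[[_ [M _]]|[_ E]]]; tauto.
Qed.

Lemma Fn_c2 n : 1 <= n -> coord (Fn n) 2 = true.
Proof. intro; destruct n; [lia|reflexivity]. Qed.


Lemma c_cases n D phi Hex x : 1 <= n -> maxth n D phi ->
  (inc n D x /\ exists k, k <= n - 1 /\ canon n D Hex x = tn n k) \/
  (~ inc n D x /\ derivCn n D x /\ canon n D Hex x = Tn n) \/
  (~ derivCn n D x /\ derivCn n D (Neg x) /\ canon n D Hex x = Fn n).
Proof.
  intros Hn H. destruct (canon_spec n D Hex x) as [[I [k [K E]]]|[[N [M E]]|[N E]]].
  - left; split; auto; exists k; split; auto; apply K.
  - right; left; auto.
  - right; right; repeat split; auto. destruct (M_neg n D phi x H); tauto.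
Qed.

Lemma c_c1 n D phi Hex x : 1 <= n -> maxth n D phi ->
  (coord (canon n D Hex x) 1 = true <-> derivCn n D x).
Proof.
  intros Hn H. destruct (c_cases n D phi Hex x Hn H) as [[I [k [_ E]]]|[[N [M E]]|[N [M E]]]];
  rewrite E.
  - rewrite tn_c1; split; auto; intros; apply I.
  - split; auto.
  - rewrite Fn_c1; split; [discriminate|tauto].
Qed.

Lemma c_c2 n D phi Hex x : 1 <= n -> maxth n D phi ->
  (coord (canon n D Hex x) 2 = true <-> derivCn n D (Neg x)).
Proof.
  intros Hn H. destruct (c_cases n D phi Hex x Hn H) as [[I [k [_ E]]]|[[N [M E]]|[N [M E]]]];
  rewrite E.
  - rewrite tn_c2 by auto; split; auto; intros; apply I.
  - rewrite Tn_c2; split; [discriminate|]. intro; exfalso; apply N; split; auto.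
  - rewrite Fn_c2 by auto; tauto.
Qed.

Lemma c_boo n D phi Hex x : 1 <= n -> maxth n D phi ->
  (inBoo n (canon n D Hex x) <-> ~ inc n D x).
Proof.
  intros Hn H. destruct (c_cases n D phi Hex x Hn H) as [[I [k [_ E]]]|[[N [M E]]|[N [M E]]]];
  rewrite E; unfold inBoo.
  - split; [intros [X|X]; [apply tn_ne_T in X|apply tn_ne_F in X]; contradiction| tauto].
  - tauto.
  - split; auto. intros _ [X _]; auto.
Qed.

Lemma c_inB n D phi Hex x : 1 <= n -> maxth n D phi -> inB n (canon n D Hex x).
Proof.
  intros Hn H. destruct (c_cases n D phi Hex x Hn H) as [[I [k [_ E]]]|[[N [M E]]|[N [M E]]]];
  rewrite E; [apply inB_tn|apply inB_Tn; auto|apply inB_Fn].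
Qed.

Lemma binM_of n op z w u : inB n u -> coord u 1 = op (coord z 1) (coord w 1) ->
  (inBoo n z -> inBoo n w -> inBoo n u) -> binM n op z w u.
Proof. intros B E F. split; intro X; split; auto. apply F; tauto. Qed.

Lemma canon_val n D phi Hex : 1 <= n -> maxth n D phi -> valuation n (canon n D Hex).
Proof.
  intros Hn H. set (nu := canon n D Hex).
  assert (C1 : forall x, coord (nu x) 1 = true <-> derivCn n D x) by (intro; apply (c_c1 n D phi); auto).
  assert (C2 : forall x, coord (nu x) 2 = true <-> derivCn n D (Neg x)) by (intro; apply (c_c2 n D phi); auto).
  assert (CB : forall x, inBoo n (nu x) <-> ~ inc n D x) by (intro; apply (c_boo n D phi); auto).
  assert (IB : forall x, inB n (nu x)) by (intro; apply (c_inB n D phi); auto).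
  assert (BB : forall a b, inBoo n (nu a) -> inBoo n (nu b) ->
     inBoo n (nu (And a b)) /\ inBoo n (nu (Or a b)) /\ inBoo n (nu (Imp a b))).
  { intros a b A B. rewrite !CB. rewrite CB in A, B. apply (cons_bin n D phi); auto. }
  split; [exact IB|]. split; [|split; [|split]].
  - intro a. split; [apply IB|split].
    + apply eq_iff_eq_true. rewrite C1, C2. tauto.
    + destruct (coord (nu (Neg a)) 2) eqn:E; simpl; auto.
      apply C2 in E. apply C1. apply M_nn; auto.
  - intros a b. apply binM_of; [apply IB| |intros; apply BB; auto].
    apply eq_iff_eq_true. rewrite andb_true_iff, !C1. apply M_and.
  - intros a b. apply binM_of; [apply IB| |intros; apply BB; auto].
    apply eq_iff_eq_true. rewrite orb_true_iff, !C1. apply (M_or n D phi); auto.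
  - intros a b. apply binM_of; [apply IB| |intros; apply BB; auto].
    apply eq_iff_eq_true. rewrite C1, (M_imp n D phi a b Hn H), <- !C1.
    destruct (coord (nu a) 1), (coord (nu b) 1); simpl; intuition congruence.
Qed.

Lemma canon_F n D phi Hex : 2 <= n -> maxth n D phi -> inFCn n (canon n D Hex).
Proof.
  intros Hn H. set (nu := canon n D Hex).
  assert (Gk : forall a k, k <= n - 1 -> nu a = tn n k -> inc n D a /\ kspec n D a k).
  { intros a k Hk E.
    destruct (c_cases n D phi Hex a ltac:(lia) H) as [[I [k' [Hk' E']]]|[[N [M E']]|[N [M E']]]];
      fold nu in E'; rewrite E' in E.
    - assert (k' = k) by (apply (tn_inj n); auto). subst k'.
      destruct (kspec_ex n D phi a ltac:(lia) H I) as [k'' K].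
      pose proof (c_inc n D Hex a k'' I K) as E''. fold nu in E''. rewrite E' in E''.
      assert (k'' = k) by (apply (tn_inj n); auto; apply K). subst; auto.
    - symmetry in E; apply tn_ne_T in E; contradiction.
    - symmetry in E; apply tn_ne_F in E; contradiction. }
  split; [apply (canon_val n D phi); auto; lia|split].
  - intros a E. destruct (Gk a 0 ltac:(lia) E) as [I (_&_&K)].
    apply c_T.
    + intros [_ X]. apply K, X.
    + apply M_and; split; apply I.
  - intros a k Hk E. destruct (Gk a k ltac:(lia) E) as [I (_&K2&K3)].
    assert (I1 : inc n D (fpow 1 a)) by (apply K2; lia).
    split.
    + split; [apply (c_inB n D phi); auto; lia|]. unfold nu; rewrite (c_boo n D phi); [|lia|auto].
      intro N; apply N. split; [apply M_and; split; apply I| apply I1].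
    + apply c_inc; auto. split; [lia|split].
      * intros j Hj. rewrite fpow_S1. apply K2; lia.
      * rewrite fpow_S1. replace (S (S (k - 1))) with (S k) by lia. exact K3.
Qed.

Theorem mainTheorem13 (n : nat) (Hn : 2 <= n) (Gamma : form -> Prop) (phi : form) :
  derivCn n Gamma phi <-> RNconseq n Gamma phi.
Proof.
  split; [apply soundness; auto|].
  intro R. apply NNPP; intro N.
  pose proof (Delta_max n Gamma phi N) as H.
  pose proof (vspec_ex n (Delta n Gamma phi) phi ltac:(lia) H) as Hex.
  assert (X := R (canon n _ Hex) (canon_F n _ phi Hex Hn H)).
  apply (proj1 H). apply (c_c1 n _ phi Hex phi ltac:(lia) H). apply X.
  intros g Hg. apply (c_c1 n _ phi Hex g ltac:(lia) H). apply DHyp, Delta_sup, Hg.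
Qed.
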